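(* Let $\beta>0$, $\gamma\ge0$, $\mu_c,\mu_d,\varphi\in\mathbb R$, $\sigma,\sigma_c,\sigma_d>0$ and $-1<\rho<1$. Let $\{(\xi_t,\epsilon_t,\eta_t)\}_{t\ge1}$ be iid standard normal in $\mathbb R^3$, let $X_{t+1}=\rho X_t+\sigma\eta_{t+1}$ with $X_0\sim N(0,\sigma^2/(1-\rho^2))$ independent of the shocks, and $$\Phi_{t+1}=\beta\exp\{(\mu_d+\varphi X_t+\sigma_d\xi_{t+1})-\gamma(\mu_c+X_t+\sigma_c\epsilon_{t+1})\}.$$ Then for every $p\ge1$ the limit $\mathcal L_\Phi^p$ exists and $$\mathcal L_\Phi^p=\ln\beta+\mu_d-\gamma\mu_c+\frac{\sigma^2}{2}\frac{(\varphi-\gamma)^2}{(1-\rho)^2}+\frac{\sigma_d^2+(\gamma\sigma_c)^2}{2}.$$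
   Context: $\mathcal L_\Phi^p:=\lim_{n\to\infty}\frac{1}{np}\ln\int\big(\mathbb E_x\prod_{t=1}^n\Phi_t\big)^p\pi(dx)$, where $\mathbb E_x$ denotes expectation conditional on $X_0=x$ and $\pi=N(0,\sigma^2/(1-\rho^2))$ is the stationary law of $\{X_t\}$. *)

(* Defs.v *)
From Stdlib Require Import Reals ClassicalEpsilon.
Open Scope R_scope.

Definition improper_integral (f : R -> R) (l : R) : Prop :=
  (forall a b, inhabited (Riemann_integrable f a b)) /\
  forall eps, 0 < eps -> exists M, forall a b (pr : Riemann_integrable f a b),
    a <= - M -> M <= b -> Rabs (RiemannInt pr - l) < eps.

(** The value of the improper integral (chosen classically; meaningful
    whenever the integral exists). *)
Definition Integral (f : R -> R) : R :=
  epsilon (inhabits 0) (fun l => improper_integral f l).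

Definition normal_density (v : R) (z : R) : R :=
  exp (- (z * z) / (2 * v)) / sqrt (2 * PI * v).

Definition GE (g : R -> R) : R := Integral (fun z => g z * normal_density 1 z).

Definition scons (z : R) (w : nat -> R) : nat -> R :=
  fun k => match k with O => z | S k' => w k' end.

(** Expectation of F(W) where W_0, ..., W_{m-1} are iid standard normal
    (F is meant to depend only on the first m coordinates; the remaining
    coordinates are set to 0), computed as an iterated integral. *)
Fixpoint GEn (m : nat) (F : (nat -> R) -> R) : R :=
  match m with
  | O => F (fun _ => 0)
  | S m' => GE (fun z => GEn m' (fun w => F (scons z w)))
  end.

(** Shocks: for t >= 1, xi_t = w (3(t-1)), eps_t = w (3(t-1)+1),
    eta_t = w (3(t-1)+2). *)
Definition xi (w : nat -> R) (t : nat) : R := w (3 * (t - 1))%nat.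
Definition epsi (w : nat -> R) (t : nat) : R := w (3 * (t - 1) + 1)%nat.
Definition eta (w : nat -> R) (t : nat) : R := w (3 * (t - 1) + 2)%nat.

Fixpoint Xpath (rho sigma x : R) (w : nat -> R) (t : nat) : R :=
  match t with
  | O => x
  | S t' => rho * Xpath rho sigma x w t' + sigma * eta w (S t')
  end.

Definition Phi (beta gamma mu_c mu_d varphi rho sigma sigma_c sigma_d x : R)
  (w : nat -> R) (t1 : nat) : R :=
  let t := (t1 - 1)%nat in
  let X := Xpath rho sigma x w t in
  beta * exp ((mu_d + varphi * X + sigma_d * xi w t1)
              - gamma * (mu_c + X + sigma_c * epsi w t1)).

Fixpoint prodR (n : nat) (f : nat -> R) : R :=
  match n with O => 1 | S n' => prodR n' f * f n end.
(* prodR n f = f 1 * ... * f n *)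

Definition condExpProdPhi (beta gamma mu_c mu_d varphi rho sigma sigma_c sigma_d : R)
  (n : nat) (x : R) : R :=
  GEn (3 * n)%nat (fun w =>
    prodR n (Phi beta gamma mu_c mu_d varphi rho sigma sigma_c sigma_d x w)).

Definition LPhi_seq (beta gamma mu_c mu_d varphi rho sigma sigma_c sigma_d p : R)
  (n : nat) : R :=
  / (INR n * p) *
  ln (Integral (fun x =>
        Rpower (condExpProdPhi beta gamma mu_c mu_d varphi rho sigma sigma_c sigma_d n x) p
        * normal_density (sigma ^ 2 / (1 - rho ^ 2)) x)).

(* Main.v *)
Require Import Defs.
From Stdlib Require Import Reals.
Open Scope R_scope.
From Coquelicot Require Import Coquelicot.
From Stdlib Require Import Lra Psatz ClassicalEpsilon FunctionalExtensionality.
Open Scope R_scope.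

Definition gau (t : R) : R := exp (- (t * t)).
Definition gI (x : R) : R := RInt gau 0 x.
Definition uF (x t : R) : R := exp (- (x * x) * (1 + t * t)) / (1 + t * t).
Definition FF (x : R) : R := RInt (uF x) 0 1.

Lemma cont_gau (x : R) : continuous gau x.
Proof.
  apply (@ex_derive_continuous R_AbsRing R_NormedModule). unfold gau. auto_derive. auto.
Qed.

Lemma ex_RInt_gau a b : ex_RInt gau a b.
Proof. apply (@ex_RInt_continuous R_CompleteNormedModule). intros; apply cont_gau. Qed.

Lemma cont_uF (x t : R) : continuous (uF x) t.
Proof.
  apply (@ex_derive_continuous R_AbsRing R_NormedModule). unfold uF. auto_derive. nra.
Qed.

Lemma ex_RInt_uF x a b : ex_RInt (uF x) a b.
Proof. apply (@ex_RInt_continuous R_CompleteNormedModule). intros; apply cont_uF. Qed.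

Lemma der_gI (x : R) : is_derive gI x (gau x).
Proof.
  apply is_derive_RInt with (a := 0).
  - apply filter_forall. intros b. apply (@RInt_correct R_CompleteNormedModule), ex_RInt_gau.
  - apply cont_gau.
Qed.

Lemma Derive_uF (x t : R) : Derive (fun z => uF z t) x = -2 * x * exp (- (x * x) * (1 + t * t)).
Proof.
  apply is_derive_unique. unfold uF. auto_derive. nra.
  field. nra.
Qed.

Lemma cont2_exp f x y : continuity_2d_pt f x y -> continuity_2d_pt (fun u v => exp (f u v)) x y.
Proof.
  intros H. apply continuity_1d_2d_pt_comp; auto.
  apply derivable_continuous_pt, derivable_pt_exp.
Qed.

Lemma gI_lin (x : R) : RInt (fun t => x * gau (x * t)) 0 1 = gI x.
Proof.
  unfold gI.
  assert (E := RInt_comp_lin gau x 0 0 1 (ex_RInt_gau _ _)).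
  replace (x*0+0) with 0 in E by ring. replace (x*1+0) with x in E by ring.
  rewrite <- E.
  apply RInt_ext. intros. replace (x * x0 + 0) with (x * x0) by ring. reflexivity.
Qed.

Lemma der_FF (x : R) : is_derive FF x (-2 * exp (- (x * x)) * gI x).
Proof.
  assert (H := is_derive_RInt_param uF 0 1 x).
  unfold FF.
  replace (-2 * exp (- (x * x)) * gI x) with (RInt (fun t => Derive (fun u => uF u t) x) 0 1).
  apply H.
  - apply filter_forall. intros; unfold uF; auto_derive; nra.
  - intros t _. eapply continuity_2d_pt_ext.
    { intros u v. symmetry. apply Derive_uF. }
    apply continuity_2d_pt_mult.
    + apply continuity_2d_pt_mult. apply continuity_2d_pt_const. apply continuity_2d_pt_id1.
    + apply cont2_exp. apply continuity_2d_pt_mult.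
      * apply continuity_2d_pt_opp. apply continuity_2d_pt_mult; apply continuity_2d_pt_id1.
      * apply continuity_2d_pt_plus. apply continuity_2d_pt_const.
        apply continuity_2d_pt_mult; apply continuity_2d_pt_id2.
  - apply filter_forall. intros; apply ex_RInt_uF.
  - rewrite <- gI_lin.
    transitivity (RInt (fun t => scal (-2 * exp (- (x * x))) (x * gau (x * t))) 0 1).
    + apply RInt_ext. intros t _. rewrite Derive_uF. unfold gau, scal; simpl; unfold mult; simpl.
      replace (- (x * x) * (1 + t * t)) with (- (x*x) + - (x*t*(x*t))) by ring.
      rewrite exp_plus. ring.
    + rewrite (@RInt_scal R_CompleteNormedModule). reflexivity.
      apply (@ex_RInt_continuous R_CompleteNormedModule). intros.
      apply (@ex_derive_continuous R_AbsRing R_NormedModule). unfold gau. auto_derive. auto.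
Qed.

Definition hh (x : R) : R := FF x + gI x * gI x.

Lemma hh_const (x : R) : 0 < x -> hh x = hh 0.
Proof.
  intros Hx. symmetry. apply (eq_is_derive hh 0 x); auto.
  intros t _. unfold hh.
  replace (@zero R_NormedModule) with (-2 * exp (- (t * t)) * gI t + (gau t * gI t + gI t * gau t)).
  apply (@is_derive_plus R_AbsRing R_NormedModule). apply der_FF.
  apply (@is_derive_mult R_AbsRing). apply der_gI. apply der_gI.
  intros; apply Rmult_comm.
  unfold gau, zero. simpl. ring.
Qed.

Lemma FF0 : FF 0 = PI / 4.
Proof.
  unfold FF. rewrite <- atan_1.
  replace (atan 1) with (atan 1 - atan 0) by (rewrite atan_0; ring).
  apply is_RInt_unique.
  eapply is_RInt_ext. 2: apply (@is_RInt_derive R_CompleteNormedModule atan (fun x => / (1 + x^2))).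
  - intros t _. unfold uF. replace (- (0 * 0) * (1 + t * t)) with 0 by ring. rewrite exp_0.
    simpl. field. nra.
  - intros t _. apply is_derive_Reals, derivable_pt_lim_atan.
  - intros t _. apply (@ex_derive_continuous R_AbsRing R_NormedModule). auto_derive. nra.
Qed.

Lemma gI0 : gI 0 = 0.
Proof. unfold gI. apply (@RInt_point R_CompleteNormedModule). Qed.

Lemma hh0 : hh 0 = PI / 4.
Proof. unfold hh. rewrite FF0, gI0. ring. Qed.

Lemma FF_bound (x : R) : 0 <= FF x <= exp (- (x * x)).
Proof.
  unfold FF. split.
  - apply RInt_ge_0. lra. apply ex_RInt_uF. intros t _. unfold uF.
    apply Rlt_le, Rdiv_lt_0_compat. apply exp_pos. nra.
  - apply Rle_trans with (RInt (fun _ => exp (- (x * x))) 0 1).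
    + apply RInt_le. lra. apply ex_RInt_uF. apply ex_RInt_const.
      intros t Ht. unfold uF. unfold Rdiv.
      apply Rle_trans with (exp (- (x * x) * (1 + t * t)) * 1).
      * apply Rmult_le_compat_l. apply Rlt_le, exp_pos.
        rewrite <- Rinv_1. apply Rinv_le_contravar. lra. nra.
      * rewrite Rmult_1_r. destruct (Req_dec (x*x*(t*t)) 0) as [E|E].
        -- right. f_equal. nra.
        -- left. apply exp_increasing. nra.
    + rewrite RInt_const. unfold scal; simpl; unfold mult; simpl. lra.
Qed.

Lemma gI_nonneg (x : R) : 0 <= x -> 0 <= gI x.
Proof.
  intros Hx. unfold gI. apply RInt_ge_0; auto. apply ex_RInt_gau.
  intros; unfold gau; apply Rlt_le, exp_pos.
Qed.

Lemma gI_sq (x : R) : 0 < x -> gI x * gI x = PI / 4 - FF x.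
Proof. intros Hx. assert (H := hh_const x Hx). rewrite hh0 in H. unfold hh in H. lra. Qed.

Definition sq : R := sqrt PI / 2.

Lemma sq_pos : 0 < sq.
Proof. unfold sq. apply Rdiv_lt_0_compat. apply sqrt_lt_R0, PI_RGT_0. lra. Qed.

Lemma sq_sq : sq * sq = PI / 4.
Proof. unfold sq. replace (sqrt PI / 2 * (sqrt PI / 2)) with (sqrt PI * sqrt PI / 4) by field.
  rewrite sqrt_sqrt. reflexivity. apply Rlt_le, PI_RGT_0. Qed.

Lemma gI_lim (eps : R) : 0 < eps -> exists M, forall x, M <= x -> Rabs (gI x - sq) < eps.
Proof.
  intros He. assert (Hs := sq_pos).
  exists (Rmax 1 (1 + Rabs (ln (eps * sq)))). intros x Hx.
  assert (H1 : 1 <= x) by (eapply Rle_trans; [apply Rmax_l|exact Hx]).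
  assert (H2 : 1 + Rabs (ln (eps * sq)) <= x) by (eapply Rle_trans; [apply Rmax_r|exact Hx]).
  assert (Hg := gI_nonneg x ltac:(lra)).
  assert (Hsq := gI_sq x ltac:(lra)).
  assert (HF := FF_bound x).
  assert (Hexp : exp (- (x * x)) < eps * sq).
  { apply Rle_lt_trans with (exp (- x)).
    - destruct (Req_dec x 1) as [E|E]. subst. right. f_equal. ring.
      left. apply exp_increasing. nra.
    - rewrite <- (exp_ln (eps * sq)) by nra. apply exp_increasing.
      assert (T := Rle_abs (- ln (eps * sq))). rewrite Rabs_Ropp in T. lra. }
  assert (E : (gI x - sq) * (gI x + sq) = - FF x).
  { assert (S := sq_sq). nra. }
  assert (Habs : Rabs (gI x - sq) * (gI x + sq) = FF x).
  { rewrite <- (Rabs_pos_eq (gI x + sq)) by lra. rewrite <- Rabs_mult, E.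
    rewrite Rabs_Ropp. apply Rabs_pos_eq. lra. }
  apply Rmult_lt_reg_r with (gI x + sq). lra.
  rewrite Habs. nra.
Qed.

Lemma gI_odd (x : R) : gI (- x) = - gI x.
Proof.
  unfold gI.
  assert (E := RInt_comp_lin gau (-1) 0 0 x (ex_RInt_gau _ _)).
  replace (-1*0+0) with 0 in E by ring. replace (-1*x+0) with (-x) in E by ring.
  rewrite <- E.
  rewrite (RInt_ext _ (fun y => scal (-1) (gau y))).
  rewrite (@RInt_scal R_CompleteNormedModule). unfold scal; simpl; unfold mult; simpl. ring.
  apply ex_RInt_gau.
  intros y _. unfold gau. f_equal. f_equal. ring.
Qed.

Lemma RInt_gau_shift (a b c m : R) : 0 < c ->
  RInt (fun z => gau ((z - m) / c)) a b = c * (gI ((b - m) / c) - gI ((a - m) / c)).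
Proof.
  intros Hc.
  assert (E := RInt_comp_lin gau (/c) (- m / c) a b (ex_RInt_gau _ _)).
  rewrite (@RInt_scal R_CompleteNormedModule) in E.
  2:{ apply (@ex_RInt_continuous R_CompleteNormedModule). intros.
      apply (@ex_derive_continuous R_AbsRing R_NormedModule). unfold gau. auto_derive. auto. }
  unfold scal in E; simpl in E; unfold mult in E; simpl in E.
  rewrite (RInt_ext _ (fun y => gau (/ c * y + - m / c))).
  2:{ intros; f_equal; field; lra. }
  assert (Ch := RInt_Chasles gau 0 (/ c * a + - m / c) (/ c * b + - m / c) (ex_RInt_gau _ _) (ex_RInt_gau _ _)).
  unfold plus in Ch; simpl in Ch.
  unfold gI.
  replace ((b - m) / c) with (/ c * b + - m / c) by (field; lra).
  replace ((a - m) / c) with (/ c * a + - m / c) by (field; lra).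
  rewrite <- Ch. rewrite <- E. assert (Q : forall J K : R, J = c * (K + / c * J - K)) by (intros; field; lra). apply Q.
Qed.

Lemma improper_unique f l1 l2 : improper_integral f l1 -> improper_integral f l2 -> l1 = l2.
Proof.
  intros [Hi H1] [_ H2].
  apply Rle_antisym; apply Rnot_lt_le; intros Hlt.
  - destruct (H1 ((l1 - l2)/2) ltac:(lra)) as [M1 HM1].
    destruct (H2 ((l1 - l2)/2) ltac:(lra)) as [M2 HM2].
    set (M := Rmax (Rabs M1) (Rabs M2)).
    destruct (Hi (-M) M) as [pr].
    assert (A1 : -M <= -M1) by (unfold M; assert (T:=Rmax_l (Rabs M1) (Rabs M2)); assert (T2:=Rle_abs M1); lra).
    assert (A2 : -M <= -M2) by (unfold M; assert (T:=Rmax_r (Rabs M1) (Rabs M2)); assert (T2:=Rle_abs M2); lra).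
    assert (B1 : M1 <= M) by (unfold M; assert (T:=Rmax_l (Rabs M1) (Rabs M2)); assert (T2:=Rle_abs M1); lra).
    assert (B2 : M2 <= M) by (unfold M; assert (T:=Rmax_r (Rabs M1) (Rabs M2)); assert (T2:=Rle_abs M2); lra).
    specialize (HM1 _ _ pr A1 B1). specialize (HM2 _ _ pr A2 B2).
    apply Rabs_def2 in HM1. apply Rabs_def2 in HM2. lra.
  - destruct (H1 ((l2 - l1)/2) ltac:(lra)) as [M1 HM1].
    destruct (H2 ((l2 - l1)/2) ltac:(lra)) as [M2 HM2].
    set (M := Rmax (Rabs M1) (Rabs M2)).
    destruct (Hi (-M) M) as [pr].
    assert (A1 : -M <= -M1) by (unfold M; assert (T:=Rmax_l (Rabs M1) (Rabs M2)); assert (T2:=Rle_abs M1); lra).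
    assert (A2 : -M <= -M2) by (unfold M; assert (T:=Rmax_r (Rabs M1) (Rabs M2)); assert (T2:=Rle_abs M2); lra).
    assert (B1 : M1 <= M) by (unfold M; assert (T:=Rmax_l (Rabs M1) (Rabs M2)); assert (T2:=Rle_abs M1); lra).
    assert (B2 : M2 <= M) by (unfold M; assert (T:=Rmax_r (Rabs M1) (Rabs M2)); assert (T2:=Rle_abs M2); lra).
    specialize (HM1 _ _ pr A1 B1). specialize (HM2 _ _ pr A2 B2).
    apply Rabs_def2 in HM1. apply Rabs_def2 in HM2. lra.
Qed.

Lemma Integral_eq f l : improper_integral f l -> Integral f = l.
Proof.
  intros H. unfold Integral.
  assert (Hs := epsilon_spec (inhabits 0) (fun l => improper_integral f l) (ex_intro _ l H)).
  eapply improper_unique; eauto.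
Qed.

Lemma gauss_improper (k a v : R) : 0 < v ->
  improper_integral (fun z => k * exp (a * z) * normal_density v z) (k * exp (a ^ 2 * v / 2)).
Proof.
  intros Hv.
  set (c := sqrt (2 * v)). set (m := a * v).
  set (K0 := k * exp (a ^ 2 * v / 2) / sqrt (2 * PI * v)).
  assert (Hc : 0 < c) by (apply sqrt_lt_R0; lra).
  assert (Hcc : c * c = 2 * v) by (apply sqrt_sqrt; lra).
  assert (Hpi := PI_RGT_0).
  assert (Hsp : 0 < sqrt (2 * PI * v)) by (apply sqrt_lt_R0; nra).
  assert (Ef : forall z, k * exp (a * z) * normal_density v z = K0 * gau ((z - m) / c)).
  { intros z. unfold K0, normal_density, gau.
    replace ((z - m) / c * ((z - m) / c)) with ((z - m) * (z - m) / (c * c)) by (field; lra).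
    rewrite Hcc. unfold Rdiv.
    replace (k * exp (a * z) * (exp (- (z * z) * / (2 * v)) * / sqrt (2 * PI * v)))
      with (k * / sqrt (2 * PI * v) * (exp (a * z) * exp (- (z * z) * / (2 * v)))) by ring.
    replace (k * exp (a ^ 2 * v * / 2) * / sqrt (2 * PI * v) * exp (- ((z - m) * (z - m) * / (2 * v))))
      with (k * / sqrt (2 * PI * v) * (exp (a ^ 2 * v * / 2) * exp (- ((z - m) * (z - m) * / (2 * v))))) by ring.
    rewrite <- !exp_plus. f_equal. f_equal. unfold m. field. lra. }
  assert (Hex : forall a0 b0, ex_RInt (fun z => k * exp (a * z) * normal_density v z) a0 b0).
  { intros. apply (ex_RInt_ext (fun z => K0 * gau ((z - m) / c))).
    intros; symmetry; apply Ef.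
    apply (@ex_RInt_continuous R_CompleteNormedModule). intros.
    apply (@ex_derive_continuous R_AbsRing R_NormedModule). unfold gau. auto_derive. auto. }
  assert (HR : forall a0 b0, RInt (fun z => k * exp (a * z) * normal_density v z) a0 b0
                = K0 * c * (gI ((b0 - m) / c) - gI ((a0 - m) / c))).
  { intros. rewrite (RInt_ext _ (fun z => scal K0 (gau ((z - m) / c)))).
    2:{ intros; apply Ef. }
    rewrite (@RInt_scal R_CompleteNormedModule).
    2:{ apply (@ex_RInt_continuous R_CompleteNormedModule). intros.
      apply (@ex_derive_continuous R_AbsRing R_NormedModule). unfold gau. auto_derive. auto. }
    unfold scal; simpl; unfold mult; simpl. rewrite RInt_gau_shift by lra.
    assert (Q : forall J : R, K0 * (c * J) = K0 * c * J) by (intros; ring). apply Q. }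
  assert (Htarget : k * exp (a ^ 2 * v / 2) = K0 * c * (2 * sq)).
  { unfold K0, sq, c.
    replace (2 * PI * v) with ((2 * v) * PI) by ring.
    rewrite sqrt_mult by nra. field.
    split; apply Rgt_not_eq; apply sqrt_lt_R0; nra. }
  split.
  - intros a0 b0. constructor. apply ex_RInt_Reals_0. apply Hex.
  - intros eps He.
    set (e' := eps / (2 * (Rabs (K0 * c) + 1))).
    assert (He' : 0 < e') by (unfold e'; apply Rdiv_lt_0_compat; [lra| assert (T := Rabs_pos (K0*c)); lra]).
    destruct (gI_lim e' He') as [M0 HM0].
    exists (c * Rabs M0 + Rabs m).
    intros a0 b0 pr Ha Hb.
    rewrite <- RInt_Reals. rewrite HR, Htarget.
    assert (T1 : Rabs M0 <= (b0 - m) / c).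
    { apply Rmult_le_reg_l with c; auto. replace (c * ((b0 - m) / c)) with (b0 - m) by (field; lra).
      assert (T := Rle_abs m). lra. }
    assert (T2 : Rabs M0 <= - ((a0 - m) / c)).
    { apply Rmult_le_reg_l with c; auto. replace (c * - ((a0 - m) / c)) with (m - a0) by (field; lra).
      assert (T := Rle_abs (- m)). rewrite Rabs_Ropp in T. lra. }
    assert (U1 := HM0 _ (Rle_trans _ _ _ (Rle_abs M0) T1)).
    assert (U2 := HM0 _ (Rle_trans _ _ _ (Rle_abs M0) T2)).
    rewrite gI_odd in U2.
    replace (K0 * c * (gI ((b0 - m) / c) - gI ((a0 - m) / c)) - K0 * c * (2 * sq))
      with (K0 * c * ((gI ((b0 - m) / c) - sq) + (- gI ((a0 - m) / c) - sq))).
    2:{ ring. }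
    rewrite Rabs_mult.
    apply Rle_lt_trans with (Rabs (K0 * c) * (2 * e')).
    + apply Rmult_le_compat_l. apply Rabs_pos.
      eapply Rle_trans. apply Rabs_triang. lra.
    + unfold e'. assert (T := Rabs_pos (K0*c)).
      replace (Rabs (K0 * c) * (2 * (eps / (2 * (Rabs (K0 * c) + 1)))))
        with (eps * (Rabs (K0 * c) / (Rabs (K0 * c) + 1))) by (field; lra).
      rewrite <- (Rmult_1_r eps) at 2. apply Rmult_lt_compat_l. lra.
      apply Rmult_lt_reg_r with (Rabs (K0 * c) + 1). lra.
      unfold Rdiv. rewrite Rmult_assoc, Rinv_l by lra. lra.
Qed.

Lemma GE_ext f g : (forall z, f z = g z) -> GE f = GE g.
Proof. intros H. f_equal. apply functional_extensionality. auto. Qed.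

Lemma GEn_ext m F G : (forall w, F w = G w) -> GEn m F = GEn m G.
Proof. intros H. f_equal. apply functional_extensionality. auto. Qed.

Lemma GE_exp k a : GE (fun z => k * exp (a * z)) = k * exp (a ^ 2 / 2).
Proof.
  unfold GE. rewrite (Integral_eq _ _ (gauss_improper k a 1 Rlt_0_1)).
  f_equal. f_equal. field.
Qed.

Definition W3 (z0 z1 z2 : R) (w : nat -> R) := scons z0 (scons z1 (scons z2 w)).

Lemma xi_W z0 z1 z2 w t : (1 <= t)%nat -> xi (W3 z0 z1 z2 w) (S t) = xi w t.
Proof. intros H. unfold xi. replace (3 * (S t - 1))%nat with (3 + 3 * (t - 1))%nat by lia. reflexivity. Qed.
Lemma epsi_W z0 z1 z2 w t : (1 <= t)%nat -> epsi (W3 z0 z1 z2 w) (S t) = epsi w t.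
Proof. intros H. unfold epsi. replace (3 * (S t - 1) + 1)%nat with (3 + (3 * (t - 1) + 1))%nat by lia. reflexivity. Qed.
Lemma eta_W z0 z1 z2 w t : (1 <= t)%nat -> eta (W3 z0 z1 z2 w) (S t) = eta w t.
Proof. intros H. unfold eta. replace (3 * (S t - 1) + 2)%nat with (3 + (3 * (t - 1) + 2))%nat by lia. reflexivity. Qed.

Lemma Xpath_W rho sigma x z0 z1 z2 w t :
  Xpath rho sigma x (W3 z0 z1 z2 w) (S t) = Xpath rho sigma (rho * x + sigma * z2) w t.
Proof.
  induction t as [|t IH].
  - reflexivity.
  - change (Xpath rho sigma x (W3 z0 z1 z2 w) (S (S t))) with
      (rho * Xpath rho sigma x (W3 z0 z1 z2 w) (S t) + sigma * eta (W3 z0 z1 z2 w) (S (S t))).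
    rewrite IH, eta_W by lia. reflexivity.
Qed.

Lemma Phi_W beta gamma mu_c mu_d varphi rho sigma sigma_c sigma_d x z0 z1 z2 w t :
  (1 <= t)%nat ->
  Phi beta gamma mu_c mu_d varphi rho sigma sigma_c sigma_d x (W3 z0 z1 z2 w) (S t) =
  Phi beta gamma mu_c mu_d varphi rho sigma sigma_c sigma_d (rho * x + sigma * z2) w t.
Proof.
  intros H. unfold Phi. cbv zeta.
  replace (S t - 1)%nat with (S (t - 1)) by lia.
  rewrite Xpath_W, xi_W, epsi_W by lia. reflexivity.
Qed.

Lemma Phi_W1 beta gamma mu_c mu_d varphi rho sigma sigma_c sigma_d x z0 z1 z2 w :
  Phi beta gamma mu_c mu_d varphi rho sigma sigma_c sigma_d x (W3 z0 z1 z2 w) 1 =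
  beta * exp ((mu_d + varphi * x + sigma_d * z0) - gamma * (mu_c + x + sigma_c * z1)).
Proof. reflexivity. Qed.

Lemma prodR_S n f : prodR (S n) f = f 1%nat * prodR n (fun t => f (S t)).
Proof.
  induction n as [|n IH].
  - simpl. ring.
  - change (prodR (S (S n)) f) with (prodR (S n) f * f (S (S n))).
    rewrite IH. simpl. ring.
Qed.

Lemma prodR_ext n f g : (forall t, (1 <= t <= n)%nat -> f t = g t) -> prodR n f = prodR n g.
Proof.
  induction n as [|n IH]; intros H.
  - reflexivity.
  - simpl. rewrite IH by (intros; apply H; lia). rewrite H by lia. reflexivity.
Qed.

Lemma exp_plus_rev a b c : exp a * (exp b * c) = exp (a + b) * c.
Proof. rewrite exp_plus. ring. Qed.
Lemma exp_plus_rev2 a b : exp a * exp b = exp (a + b).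
Proof. rewrite exp_plus. ring. Qed.

Definition LL varphi gamma rho := (varphi - gamma) / (1 - rho).
Definition Bn varphi gamma rho n := LL varphi gamma rho * (1 - rho ^ n).
Definition Kc beta gamma mu_c mu_d sigma_c sigma_d :=
  ln beta + mu_d - gamma * mu_c + (sigma_d ^ 2 + (gamma * sigma_c) ^ 2) / 2.
Definition Dn varphi gamma rho sigma n :=
  sigma ^ 2 * LL varphi gamma rho ^ 2 / 2 *
  (-2 * (1 - rho ^ n) / (1 - rho) + (1 - (rho ^ n) ^ 2) / (1 - rho ^ 2)).
Definition An beta gamma mu_c mu_d varphi rho sigma sigma_c sigma_d n :=
  INR n * (Kc beta gamma mu_c mu_d sigma_c sigma_d + sigma ^ 2 * LL varphi gamma rho ^ 2 / 2)
  + Dn varphi gamma rho sigma n.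

Lemma Bn_S varphi gamma rho n : -1 < rho < 1 ->
  Bn varphi gamma rho (S n) = (varphi - gamma) + rho * Bn varphi gamma rho n.
Proof. intros H. unfold Bn, LL. simpl. field. lra. Qed.

Lemma An_S beta gamma mu_c mu_d varphi rho sigma sigma_c sigma_d n : -1 < rho < 1 ->
  An beta gamma mu_c mu_d varphi rho sigma sigma_c sigma_d (S n) =
  An beta gamma mu_c mu_d varphi rho sigma sigma_c sigma_d n
  + Kc beta gamma mu_c mu_d sigma_c sigma_d + sigma ^ 2 / 2 * Bn varphi gamma rho n ^ 2.
Proof.
  intros H. unfold An, Dn, Bn. rewrite S_INR. simpl.
  assert (1 - rho * (rho * 1) <> 0) by nra.
  field; repeat split; try lra; auto.
Qed.

Lemma A0B0 beta gamma mu_c mu_d varphi rho sigma sigma_c sigma_d x : -1 < rho < 1 ->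
  An beta gamma mu_c mu_d varphi rho sigma sigma_c sigma_d 0 + Bn varphi gamma rho 0 * x = 0.
Proof.
  intros H. unfold An, Dn, Bn. simpl.
  assert (1 - rho * (rho * 1) <> 0) by nra.
  field; repeat split; try lra; auto.
Qed.

Lemma closed_form beta gamma mu_c mu_d varphi rho sigma sigma_c sigma_d :
  0 < beta -> -1 < rho < 1 ->
  forall n x e,
  GEn (3 * n) (fun w => e * prodR n (Phi beta gamma mu_c mu_d varphi rho sigma sigma_c sigma_d x w))
  = e * exp (An beta gamma mu_c mu_d varphi rho sigma sigma_c sigma_d n + Bn varphi gamma rho n * x).
Proof.
  intros Hb Hr n. induction n as [|n IH]; intros x e.
  - rewrite A0B0 by auto. rewrite exp_0. simpl. ring.
  - replace (3 * S n)%nat with (S (S (S (3 * n)))) by lia.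
    set (A := An beta gamma mu_c mu_d varphi rho sigma sigma_c sigma_d n).
    set (B := Bn varphi gamma rho n).
    set (P1 := fun z0 z1 => beta * exp ((mu_d + varphi * x + sigma_d * z0) - gamma * (mu_c + x + sigma_c * z1))).
    assert (SA : forall z0 z1 z2,
      GEn (3 * n) (fun w => e * prodR (S n) (Phi beta gamma mu_c mu_d varphi rho sigma sigma_c sigma_d x (W3 z0 z1 z2 w)))
      = (e * P1 z0 z1 * exp (A + B * rho * x)) * exp ((B * sigma) * z2)).
    { intros z0 z1 z2.
      rewrite (GEn_ext _ _ (fun w => (e * P1 z0 z1) * prodR n (Phi beta gamma mu_c mu_d varphi rho sigma sigma_c sigma_d (rho * x + sigma * z2) w))).
      - rewrite IH. fold A B.
        replace (A + B * (rho * x + sigma * z2)) with ((A + B * rho * x) + B * sigma * z2) by ring.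
        rewrite exp_plus. ring.
      - intros w. rewrite prodR_S, Phi_W1. fold (P1 z0 z1).
        rewrite (prodR_ext n _ (Phi beta gamma mu_c mu_d varphi rho sigma sigma_c sigma_d (rho * x + sigma * z2) w)).
        ring. intros t Ht. apply Phi_W. lia. }
    set (C0 := e * beta * exp (mu_d + varphi * x - gamma * (mu_c + x)) * exp (A + B * rho * x)).
    transitivity (GE (fun z0 => GE (fun z1 => GE (fun z2 => (C0 * exp (sigma_d * z0) * exp ((- (gamma * sigma_c)) * z1)) * exp ((B * sigma) * z2))))).
    { apply GE_ext; intro z0; apply GE_ext; intro z1; apply GE_ext; intro z2.
      change (GEn (3 * n) (fun w => e * prodR (S n) (Phi beta gamma mu_c mu_d varphi rho sigma sigma_c sigma_d x (W3 z0 z1 z2 w))) = C0 * exp (sigma_d * z0) * exp (- (gamma * sigma_c) * z1) * exp (B * sigma * z2)).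
      rewrite SA. unfold C0, P1. cbv beta.
      replace (exp (mu_d + varphi * x + sigma_d * z0 - gamma * (mu_c + x + sigma_c * z1)))
        with (exp (mu_d + varphi * x - gamma * (mu_c + x)) * exp (sigma_d * z0) * exp (- (gamma * sigma_c) * z1))
        by (rewrite <- !exp_plus; f_equal; ring).
      ring. }
    transitivity (GE (fun z0 => GE (fun z1 => (C0 * exp (sigma_d * z0) * exp ((B * sigma) ^ 2 / 2)) * exp ((- (gamma * sigma_c)) * z1)))).
    { apply GE_ext; intro z0; apply GE_ext; intro z1. rewrite GE_exp. ring. }
    transitivity (GE (fun z0 => (C0 * exp ((B * sigma) ^ 2 / 2) * exp ((- (gamma * sigma_c)) ^ 2 / 2)) * exp (sigma_d * z0))).
    { apply GE_ext; intro z0. rewrite GE_exp. ring. }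
    rewrite GE_exp. unfold C0.
    rewrite Bn_S, An_S by auto. fold A B.
    rewrite <- (exp_ln beta) at 1 by auto.
    rewrite !Rmult_assoc. f_equal. rewrite !exp_plus_rev, exp_plus_rev2. f_equal. unfold Kc. field.
Qed.

Lemma cond_closed beta gamma mu_c mu_d varphi rho sigma sigma_c sigma_d n x :
  0 < beta -> -1 < rho < 1 ->
  condExpProdPhi beta gamma mu_c mu_d varphi rho sigma sigma_c sigma_d n x
  = exp (An beta gamma mu_c mu_d varphi rho sigma sigma_c sigma_d n + Bn varphi gamma rho n * x).
Proof.
  intros Hb Hr. unfold condExpProdPhi.
  rewrite (GEn_ext _ _ (fun w => 1 * prodR n (Phi beta gamma mu_c mu_d varphi rho sigma sigma_c sigma_d x w))).
  rewrite closed_form by auto. ring.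
  intros; ring.
Qed.

Lemma LPhi_val beta gamma mu_c mu_d varphi rho sigma sigma_c sigma_d p n :
  0 < beta -> -1 < rho < 1 -> 0 < sigma -> 1 <= p -> (1 <= n)%nat ->
  LPhi_seq beta gamma mu_c mu_d varphi rho sigma sigma_c sigma_d p n =
  An beta gamma mu_c mu_d varphi rho sigma sigma_c sigma_d n / INR n
  + p * Bn varphi gamma rho n ^ 2 * (sigma ^ 2 / (1 - rho ^ 2)) / (2 * INR n).
Proof.
  intros Hb Hr Hs Hp Hn.
  set (A := An beta gamma mu_c mu_d varphi rho sigma sigma_c sigma_d n).
  set (B := Bn varphi gamma rho n).
  set (v := sigma ^ 2 / (1 - rho ^ 2)).
  assert (Hv : 0 < v) by (unfold v; apply Rdiv_lt_0_compat; nra).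
  assert (HnR : 0 < INR n) by (apply lt_0_INR; lia).
  unfold LPhi_seq. fold v.
  rewrite (functional_extensionality
    (fun x => Rpower (condExpProdPhi beta gamma mu_c mu_d varphi rho sigma sigma_c sigma_d n x) p * normal_density v x)
    (fun x => exp (p * A) * exp ((p * B) * x) * normal_density v x)).
  - rewrite (Integral_eq _ _ (gauss_improper (exp (p * A)) (p * B) v Hv)).
    rewrite exp_plus_rev2, ln_exp. field. split; lra.
  - intros x. rewrite cond_closed by auto. unfold Rpower. rewrite ln_exp. fold A B.
    rewrite exp_plus_rev2. f_equal. f_equal. ring.
Qed.

Lemma inv_n_lim : is_lim_seq (fun n => / INR n) 0.
Proof. replace (Finite 0) with (Rbar_inv p_infty) by reflexivity. apply is_lim_seq_inv. apply is_lim_seq_INR. discriminate. Qed.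

Theorem mainTheorem14
  (beta gamma mu_c mu_d varphi sigma sigma_c sigma_d rho p : R)
  (hbeta : 0 < beta) (hgamma : 0 <= gamma)
  (hsigma : 0 < sigma) (hsigma_c : 0 < sigma_c) (hsigma_d : 0 < sigma_d)
  (hrho : -1 < rho < 1) (hp : 1 <= p) :
  Un_cv (LPhi_seq beta gamma mu_c mu_d varphi rho sigma sigma_c sigma_d p)
    (ln beta + mu_d - gamma * mu_c
     + sigma ^ 2 / 2 * ((varphi - gamma) ^ 2 / (1 - rho) ^ 2)
     + (sigma_d ^ 2 + (gamma * sigma_c) ^ 2) / 2).
Proof.
  apply is_lim_seq_Reals.
  set (L := LL varphi gamma rho).
  set (v := sigma ^ 2 / (1 - rho ^ 2)).
  set (T := Kc beta gamma mu_c mu_d sigma_c sigma_d + sigma ^ 2 * L ^ 2 / 2).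
  set (f := fun y => sigma ^ 2 * L ^ 2 / 2 * (-2 * (1 - y) / (1 - rho) + (1 - y ^ 2) / (1 - rho ^ 2))
                     + p * (L * (1 - y)) ^ 2 * v / 2).
  replace (ln beta + mu_d - gamma * mu_c + sigma ^ 2 / 2 * ((varphi - gamma) ^ 2 / (1 - rho) ^ 2)
     + (sigma_d ^ 2 + (gamma * sigma_c) ^ 2) / 2) with (T + f 0 * 0).
  2:{ unfold T, Kc, L, LL. field. lra. }
  apply is_lim_seq_ext_loc with (u := fun n => T + f (rho ^ n) * / INR n).
  - exists 1%nat. intros n Hn. rewrite LPhi_val by auto.
    assert (HnR : 0 < INR n) by (apply lt_0_INR; lia).
    unfold T, f, An, Dn, Bn. fold L v. field. split; [lra|]. split; [nra|lra].
  - apply is_lim_seq_plus'. apply is_lim_seq_const.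
    apply is_lim_seq_mult'. 2: apply inv_n_lim.
    apply is_lim_seq_continuous.
    + apply continuity_pt_filterlim. apply (@ex_derive_continuous R_AbsRing R_NormedModule).
      unfold f. auto_derive. exact I.
    + apply is_lim_seq_geom. apply Rabs_def1; lra.
Qed.
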